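(* Let $X$ be a quasi-geodesic metric space and let $G\curvearrowright X$ be a cobounded quasi-action with coarse stabiliser $H$. Then: (1) $G$ is finitely generated relative to $H$; (2) $H$ is a commensurated subgroup of $G$; (3) the quasi-action $G\curvearrowright X$ is quasi-conjugate to the natural left action of $G$ on $G/H$ (equipped with the relative word metric with respect to a finite relative generating set); in particular $G/H$ is quasi-isometric to $X$.
   Context: Quasi-action, cobounded, quasi-geodesic: a $(K,A)$-quasi-action assigns to each $g\in G$ a $(K,A)$-quasi-isometry $x\mapsto g\cdot x$ with $d(h\cdot(g\cdot x),hg\cdot x)\le A$ and $d(e\cdot x,x)\le A$; cobounded means some $r$ has: for all $x,y$ there is $g$ with $d(g\cdot x,y)\le r$. $T\subseteq G$ is bounded if $\{t\cdot x_0:t\in T\}$ is bounded. A coarse stabiliser is a bounded subgroup $H$ such that every bounded subset of $G$ lies in finitely many left $H$-cosets. $G$ is finitely generated relative to $H$ if there is a finite $S\subseteq G$ with $S\cup H$ generating $G$. For such $S$, the relative word metric on $G/H$ is the path metric of the graph with vertices the left cosets $gH$ and edges $(gH,gsH)$ for $g\in G$, $s\in S$. $H$ is commensurated if $gHg^{-1}\cap H$ has finite index in both $H$ and $gHg^{-1}$ for all $g$. Quasi-actions $G\curvearrowright X$, $G\curvearrowright Y$ are quasi-conjugate if there is a quasi-isometry $f:X\to Y$ with $\sup_{g,x}d(g\cdot f(x),f(g\cdot x))<\infty$. *)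

(* Defs.v *)
From HB Require Import structures.
From mathcomp Require Import all_boot all_order all_algebra.
From mathcomp Require Import all_classical all_reals.
From Stdlib Require Import List.

Set Implicit Arguments.
Unset Strict Implicit.
Unset Printing Implicit Defensive.

Import Order.TTheory GRing.Theory Num.Theory.
Local Open Scope ring_scope.
Local Open Scope classical_set_scope.

Section Defs.
Variable R : realType.

Definition is_group {G : Type} (mul : G -> G -> G) (e : G) (inv : G -> G) :=
  [/\ (forall a b c, mul a (mul b c) = mul (mul a b) c),
      (forall a, mul e a = a), (forall a, mul a e = a),
      (forall a, mul (inv a) a = e) & (forall a, mul a (inv a) = e)].

Definition is_subgroup {G : Type} (mul : G -> G -> G) (e : G) (inv : G -> G)
  (H : G -> Prop) :=
  [/\ H e, (forall a b, H a -> H b -> H (mul a b)) & (forall a, H a -> H (inv a))].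

Inductive gen {G : Type} (mul : G -> G -> G) (e : G) (inv : G -> G)
  (P : G -> Prop) : G -> Prop :=
| gen_base a : P a -> gen mul e inv P a
| gen_one : gen mul e inv P e
| gen_mul a b : gen mul e inv P a -> gen mul e inv P b -> gen mul e inv P (mul a b)
| gen_inv a : gen mul e inv P a -> gen mul e inv P (inv a).

Definition rel_gen_set {G : Type} (mul : G -> G -> G) (e : G) (inv : G -> G)
  (H : G -> Prop) (S : list G) :=
  forall g, gen mul e inv (fun x => List.In x S \/ H x) g.

Definition rel_fin_gen {G : Type} (mul : G -> G -> G) (e : G) (inv : G -> G)
  (H : G -> Prop) := exists S : list G, rel_gen_set mul e inv H S.

Definition finite_index {G : Type} (mul : G -> G -> G) (inv : G -> G)
  (K L : G -> Prop) :=
  exists cs : list G, forall l, L l -> exists c, List.In c cs /\ K (mul (inv c) l).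

Definition conjset {G : Type} (mul : G -> G -> G) (inv : G -> G)
  (H : G -> Prop) (g : G) : G -> Prop := fun x => H (mul (mul (inv g) x) g).

Definition commensurated {G : Type} (mul : G -> G -> G) (inv : G -> G)
  (H : G -> Prop) :=
  forall g, finite_index mul inv (fun x => conjset mul inv H g x /\ H x) H /\
            finite_index mul inv (fun x => conjset mul inv H g x /\ H x)
                                 (conjset mul inv H g).

Definition is_metric {X : Type} (d : X -> X -> R) :=
  [/\ (forall x y, 0 <= d x y), (forall x, d x x = 0),
      (forall x y, d x y = 0 -> x = y), (forall x y, d x y = d y x)
    & (forall x y z, d x z <= d x y + d y z)].

Definition is_qi {X Y : Type} (dX : X -> X -> R) (dY : Y -> Y -> R) (f : X -> Y)
  (K A : R) :=
  [/\ 1 <= K, 0 <= A,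
      (forall x x', dX x x' / K - A <= dY (f x) (f x')),
      (forall x x', dY (f x) (f x') <= K * dX x x' + A)
    & (forall y, exists x, dY (f x) y <= A)].

Definition quasi_geodesic {X : Type} (d : X -> X -> R) :=
  exists K A : R, 1 <= K /\ 0 <= A /\
  forall x y, exists (L : R) (c : R -> X), 0 <= L /\ c 0 = x /\ c L = y /\
    forall s t, 0 <= s <= L -> 0 <= t <= L ->
      `|s - t| / K - A <= d (c s) (c t) /\ d (c s) (c t) <= K * `|s - t| + A.

Definition quasi_action {G X : Type} (mul : G -> G -> G) (e : G)
  (d : X -> X -> R) (act : G -> X -> X) :=
  exists K A : R,
  [/\ (forall g, is_qi d d (act g) K A),
      (forall g h x, d (act h (act g x)) (act (mul h g) x) <= A)
    & (forall x, d (act e x) x <= A)].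

Definition cobounded {G X : Type} (d : X -> X -> R) (act : G -> X -> X) :=
  exists r : R, forall x y, exists g, d (act g x) y <= r.

Definition bounded_in {G X : Type} (d : X -> X -> R) (act : G -> X -> X)
  (T : G -> Prop) :=
  exists (x0 : X) (r : R), forall t, T t -> d (act t x0) x0 <= r.

Definition coarse_stabiliser {G X : Type} (mul : G -> G -> G) (e : G)
  (inv : G -> G) (d : X -> X -> R) (act : G -> X -> X) (H : G -> Prop) :=
  [/\ is_subgroup mul e inv H, bounded_in d act H &
      forall T : G -> Prop, bounded_in d act T ->
        exists gs : list G, forall t, T t ->
          exists g, List.In g gs /\ H (mul (inv g) t)].

Definition same_coset {G : Type} (mul : G -> G -> G) (inv : G -> G)
  (H : G -> Prop) (a b : G) := H (mul (inv a) b).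

Definition rel_edge {G : Type} (mul : G -> G -> G) (inv : G -> G)
  (H : G -> Prop) (S : list G) (a b : G) :=
  exists g s, List.In s S /\
    ((same_coset mul inv H a g /\ same_coset mul inv H b (mul g s)) \/
     (same_coset mul inv H b g /\ same_coset mul inv H a (mul g s))).

Fixpoint rel_path {G : Type} (mul : G -> G -> G) (inv : G -> G)
  (H : G -> Prop) (S : list G) (n : nat) (a b : G) : Prop :=
  match n with
  | 0%N => same_coset mul inv H a b
  | n'.+1 => exists c, rel_path mul inv H S n' a c /\ rel_edge mul inv H S c b
  end.

(* path metric d_S(aH, bH), viewed as a pseudometric on G *)
Definition rel_word_dist {G : Type} (mul : G -> G -> G) (inv : G -> G)
  (H : G -> Prop) (S : list G) (a b : G) : R :=
  inf [set (n%:R : R) | n in [set n : nat | rel_path mul inv H S n a b]].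

Definition quasi_conj_to_cosets {G X : Type} (mul : G -> G -> G) (inv : G -> G)
  (d : X -> X -> R) (act : G -> X -> X) (H : G -> Prop) (S : list G) :=
  exists (f : X -> G) (K A : R),
    is_qi d (rel_word_dist mul inv H S) f K A /\
    exists C : R, forall g x,
      rel_word_dist mul inv H S (mul g (f x)) (f (act g x)) <= C.

End Defs.

(* Main.v *)
Require Import Defs.
From HB Require Import structures.
From mathcomp Require Import all_boot all_order all_algebra.
From mathcomp Require Import all_classical all_reals.
From mathcomp Require Import lra.
From Stdlib Require Import List Classical.

Set Implicit Arguments.
Unset Strict Implicit.
Unset Printing Implicit Defensive.
Import Order.TTheory GRing.Theory Num.Theory.

Section Grp.
Variables (G : Type) (mul : G -> G -> G) (e : G) (inv : G -> G).
Hypothesis HG : is_group mul e inv.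

Lemma gA a b c : mul (mul a b) c = mul a (mul b c).
Proof. by case: HG => A _ _ _ _; rewrite A. Qed.
Lemma g1l a : mul e a = a. Proof. by case: HG. Qed.
Lemma g1r a : mul a e = a. Proof. by case: HG. Qed.
Lemma gVl a : mul (inv a) a = e. Proof. by case: HG. Qed.
Lemma gVr a : mul a (inv a) = e. Proof. by case: HG. Qed.
Lemma gKV a b : mul a (mul (inv a) b) = b.
Proof. by rewrite -gA gVr g1l. Qed.
Lemma gVK a b : mul (inv a) (mul a b) = b.
Proof. by rewrite -gA gVl g1l. Qed.
Lemma ginv_uniq a b : mul a b = e -> b = inv a.
Proof. by move=> h; rewrite -(gVK a b) h g1r. Qed.
Lemma gVV a : inv (inv a) = a.
Proof. by symmetry; apply: ginv_uniq; rewrite gVl. Qed.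
Lemma gVM a b : inv (mul a b) = mul (inv b) (inv a).
Proof.
symmetry; apply: ginv_uniq; rewrite gA gKV; exact: gVr.
Qed.
Lemma gV1 : inv e = e.
Proof. by rewrite -[RHS](gVl e) g1r. Qed.

Ltac gs := rewrite ?gVM ?gVV ?gV1 ?gA ?gKV ?gVK ?gVl ?gVr ?g1l ?g1r.

Variable H : G -> Prop.
Hypothesis HH : is_subgroup mul e inv H.
Lemma H1 : H e. Proof. by case: HH. Qed.
Lemma HM a b : H a -> H b -> H (mul a b). Proof. by case: HH => _ h _; apply: h. Qed.
Lemma HV a : H a -> H (inv a). Proof. by case: HH => _ _ h; apply: h. Qed.

Notation sc := (same_coset mul inv H).
Lemma sc_refl a : sc a a. Proof. by rewrite /same_coset gVl; exact: H1. Qed.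
Lemma sc_sym a b : sc a b -> sc b a.
Proof. by rewrite /same_coset => /HV; gs. Qed.
Lemma sc_trans a b c : sc a b -> sc b c -> sc a c.
Proof. rewrite /same_coset => h1 h2; have := HM h1 h2; by gs. Qed.
Lemma sc_left c a b : sc a b -> sc (mul c a) (mul c b).
Proof. by rewrite /same_coset; gs. Qed.

Variable S : list G.
Notation edge := (rel_edge mul inv H S).
Notation path := (rel_path mul inv H S).

Lemma edge_sym a b : edge a b -> edge b a.
Proof. by case=> g [s [hs [h|h]]]; exists g, s; split => //; [right|left]. Qed.
Lemma edge_resp a b b' : edge a b -> sc b b' -> edge a b'.
Proof.
case=> g [s [hs [[h1 h2]|[h1 h2]]]] hb; exists g, s; split => //.
  left; split => //; apply: sc_trans (sc_sym hb) h2.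
right; split => //; apply: sc_trans (sc_sym hb) h1.
Qed.
Lemma edge_left c a b : edge a b -> edge (mul c a) (mul c b).
Proof.
case=> g [s [hs [[h1 h2]|[h1 h2]]]]; exists (mul c g), s; split => //.
  by left; rewrite gA; split; apply: sc_left.
by right; rewrite gA; split; apply: sc_left.
Qed.

Lemma path_resp n a b b' : path n a b -> sc b b' -> path n a b'.
Proof.
case: n => [|n] /=; first exact: sc_trans.
by case=> c [h1 h2] hb; exists c; split => //; apply: edge_resp hb.
Qed.
Lemma path_cat m n a b c : path m a b -> path n b c -> path (m + n) a c.
Proof.
elim: n c => [|n IH] c hab /=; first by rewrite addn0; apply: path_resp.
by case=> c' [h1 h2]; rewrite addnS; exists c'; split => //; apply: IH.
Qed.
Lemma path_left n c a b : path n a b -> path n (mul c a) (mul c b).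
Proof.
elim: n b => [|n IH] b /=; first exact: sc_left.
by case=> c' [h1 h2]; exists (mul c c'); split; [apply: IH|apply: edge_left].
Qed.
Lemma path_edge a b : edge a b -> path 1 a b.
Proof. by move=> h; exists a; split => //; exact: sc_refl. Qed.
Lemma path_sym n a b : path n a b -> path n b a.
Proof.
elim: n b => [|n IH] b /=; first exact: sc_sym.
case=> c [h1 h2]; have := path_cat (path_edge (edge_sym h2)) (IH _ h1).
by rewrite add1n.
Qed.

Lemma path_exists g : gen mul e inv (fun x => List.In x S \/ H x) g ->
  exists n, path n e g.
Proof.
elim => {g}.
- move=> a [ha|ha].
    exists 1%N; apply: path_edge; exists e, a; split => //; left.
    by rewrite g1l; split; apply: sc_refl.
  by exists 0%N => /=; rewrite /same_coset gV1 g1l.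
- by exists 0%N; exact: sc_refl.
- move=> a b _ [m hm] _ [n hn]; exists (m + n)%N; apply: path_cat hm _.
  by have := path_left a hn; rewrite g1r.
- move=> a _ [n hn]; exists n; apply: path_sym.
  by have := path_left (inv a) hn; rewrite g1r gVl.
Qed.


Local Open Scope ring_scope.
Lemma rwd_le (R : realType) n a b : path n a b ->
  rel_word_dist R mul inv H S a b <= n%:R.
Proof.
move=> h; rewrite /rel_word_dist; apply: ge_inf; last by exists n.
by exists 0 => _ [m _ <-]; exact: ler0n.
Qed.
Lemma rwd_ge (R : realType) (x : R) a b : (exists n, path n a b) ->
  (forall n, path n a b -> x <= n%:R) -> x <= rel_word_dist R mul inv H S a b.
Proof.
move=> [n hn] hx; apply: lb_le_inf; first by exists n%:R; exists n.
by move=> _ [m hm <-]; apply: hx.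
Qed.

End Grp.

Ltac gsimp HG := rewrite ?(gVM HG) ?(gVV HG) ?(gV1 HG) ?(gA HG) ?(gKV HG) ?(gVK HG) ?(gVl HG) ?(gVr HG) ?(g1l HG) ?(g1r HG).

Local Open Scope ring_scope.
Lemma chain (R : realType) (X : Type) (d : X -> X -> R) : quasi_geodesic d ->
  exists K' A' : R, 0 <= K' /\ 0 <= A' /\ forall x y, exists (n : nat) (p : nat -> X),
    n%:R <= K' * (d x y + A') + 1 /\ p 0%N = x /\ p n = y /\
    forall j, d (p j) (p j.+1) <= K' + A'.
Proof.
case=> K' [A' [hK [hA hq]]]; exists K', A'; split; first lra; split => // x y.
have [L [c [hL [c0 [cL hc]]]]] := hq x y.
pose t (j : nat) := if j%:R <= L then j%:R else L.
have ht j : 0 <= t j <= L.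
  rewrite /t; case: ifP => h; last by rewrite hL lexx.
  by rewrite h ler0n.
have hs j : `|t j - t j.+1| <= 1.
  rewrite ler_norml /t -natr1.
  case: ifP => h1; case: ifP => h2; try (move/negbT: h1; rewrite -ltNge => h1);
    try (move/negbT: h2; rewrite -ltNge => h2); lra.
exists (Num.truncn L).+1, (fun j => c (t j)); split; last split; last split.
- have h1 := hc 0 L; rewrite lexx hL in h1; have {h1} [h1 _] := h1 isT (lexx L).
  rewrite c0 cL sub0r normrN ger0_norm // in h1.
  have h2 : L <= K' * (d x y + A').
    by rewrite mulrC -ler_pdivrMr; [lra|lra].
  have h3 : (Num.truncn L)%:R <= L by rewrite truncn_le.
  rewrite -natr1; lra.
- rewrite /t; case: ifP => h; first by rewrite ?mulr0n c0.
  by rewrite mulr0n hL in h.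
- rewrite /t; case: ifP => h; last exact: cL.
  by exfalso; have := truncnS_gt L; lra.
- move=> j; have [_ h] := hc (t j) (t j.+1) (ht j) (ht j.+1).
  have : K' * `|t j - t j.+1| <= K' * 1 by rewrite ler_wpM2l //; lra.
  lra.
Qed.

Section Geo.
Local Open Scope ring_scope.
Variables (R : realType) (G X : Type) (mul : G -> G -> G) (e : G) (inv : G -> G).
Hypothesis HG : is_group mul e inv.
Variables (d : X -> X -> R) (act : G -> X -> X) (K A : R).
Hypothesis Hd : is_metric d.
Hypothesis qi : forall g, is_qi d d (act g) K A.
Hypothesis qc : forall g h x, d (act h (act g x)) (act (mul h g) x) <= A.
Hypothesis qe : forall x, d (act e x) x <= A.
Variables (H : G -> Prop) (x0 : X) (r0 : R).
Hypothesis HH : is_subgroup mul e inv H.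
Hypothesis Hb : forall h, H h -> d (act h x0) x0 <= r0.
Hypothesis Hcov : forall T : G -> Prop, bounded_in d act T ->
        exists gs : list G, forall t, T t ->
          exists g, List.In g gs /\ H (mul (inv g) t).

Lemma dge0 x y : 0 <= d x y. Proof. by case: Hd. Qed.
Lemma dxx x : d x x = 0. Proof. by case: Hd. Qed.
Lemma dsym x y : d x y = d y x. Proof. by case: Hd. Qed.
Lemma dtri x y z : d x z <= d x y + d y z. Proof. by case: Hd => _ _ _ _; apply. Qed.
Lemma K1 : 1 <= K. Proof. by case: (qi e). Qed.
Lemma A0 : 0 <= A. Proof. by case: (qi e). Qed.
Lemma qi_up g x y : d (act g x) (act g y) <= K * d x y + A.
Proof. by case: (qi g). Qed.
Lemma Kd_le x y B : d x y <= B -> K * d x y <= K * B.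
Proof. move=> h; rewrite ler_wpM2l //; have := K1; lra. Qed.

Lemma disp a b : d (act a x0) (act b x0) <= K * d x0 (act (mul (inv a) b) x0) + 2 * A.
Proof.
have t := dtri (act a x0) (act a (act (mul (inv a) b) x0)) (act b x0).
have u := qi_up a x0 (act (mul (inv a) b) x0).
have v := qc (mul (inv a) b) a x0; rewrite (gKV HG) in v.
lra.
Qed.

Lemma disp2 a b : d (act (mul (inv a) b) x0) x0 <= K * d (act a x0) (act b x0) + 4 * A.
Proof.
have t1 := dtri (act (mul (inv a) b) x0) (act (inv a) (act b x0)) x0.
have t2 := dtri (act (inv a) (act b x0)) (act (inv a) (act a x0)) x0.
have t3 := dtri (act (inv a) (act a x0)) (act e x0) x0.
have v1 := qc b (inv a) x0; rewrite dsym in v1.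
have v2 := qc a (inv a) x0; rewrite (gVl HG) in v2.
have v3 := qe x0.
have u := qi_up (inv a) (act b x0) (act a x0); rewrite (dsym (act b x0)) in u.
lra.
Qed.

Lemma coverB B : exists gs, forall a b, d (act a x0) (act b x0) <= B ->
  exists g, List.In g gs /\ H (mul (inv g) (mul (inv a) b)).
Proof.
have hb : bounded_in d act (fun t => d (act t x0) x0 <= K * B + 4 * A).
  by exists x0, (K * B + 4 * A).
have [gs hgs] := Hcov hb.
exists gs => a b hab; apply: hgs.
have := disp2 a b; have := Kd_le hab; lra.
Qed.

Lemma d_sc a b : same_coset mul inv H a b -> d (act a x0) (act b x0) <= K * r0 + 2 * A.
Proof.
move=> h; have := disp a b; have := Kd_le (Hb h); rewrite dsym; lra.
Qed.

Section WithS.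
Variable S : list G.
Hypothesis HS : rel_gen_set mul e inv H S.

Lemma pathN gs : exists N, forall g, List.In g gs ->
  exists n, (n <= N)%N /\ rel_path mul inv H S n e g.
Proof.
elim: gs => [|g gs [N hN]]; first by exists 0%N.
have [m hm] := path_exists HG HH (HS g).
exists (maxn m N) => g' /= [<-|hg']; first by exists m; rewrite leq_maxl.
have [n [hn hp]] := hN _ hg'; exists n; split => //.
by apply: leq_trans hn _; rewrite leq_maxr.
Qed.

Lemma lemL B : exists N, forall a b, d (act a x0) (act b x0) <= B ->
  exists n, (n <= N)%N /\ rel_path mul inv H S n a b.
Proof.
have [gs hgs] := coverB B; have [N hN] := pathN gs.
exists N => a b hab; have [g [hg hH]] := hgs _ _ hab.
have [n [hn hp]] := hN _ hg; exists n; split => //.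
have := path_left HG a hp; rewrite (g1r HG) => hp'.
apply: (path_resp HG HH hp'); rewrite /same_coset.
by rewrite (gVM HG) (gA HG).
Qed.

End WithS.
Lemma H1' : H e. Proof. by case: HH. Qed.
Lemma r0ge0 : 0 <= r0. Proof. have := Hb H1'; have := dge0 (act e x0) x0; lra. Qed.

Section Main.
Variable rc : R.
Hypothesis Hrc : forall x y, exists g, d (act g x) y <= rc.
Variables K' A' : R.
Hypothesis hK' : 0 <= K'.
Hypothesis hA' : 0 <= A'.
Hypothesis hch : forall x y, exists (n : nat) (p : nat -> X),
    n%:R <= K' * (d x y + A') + 1 /\ p 0%N = x /\ p n = y /\
    forall j, d (p j) (p j.+1) <= K' + A'.

Lemma rc0 : 0 <= rc.
Proof. have [g hg] := Hrc x0 x0; have := dge0 (act g x0) x0; lra. Qed.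

Let P gs := (fun x => List.In x gs \/ H x).

Lemma gen_close gs a b s : gen mul e inv (P gs) a -> List.In s gs ->
  H (mul (inv s) (mul (inv a) b)) -> gen mul e inv (P gs) b.
Proof.
move=> ha hs hH.
have -> : b = mul a (mul s (mul (inv s) (mul (inv a) b))) by rewrite !(gKV HG).
apply: gen_mul => //; apply: gen_mul; apply: gen_base; [left|right] => //.
Qed.

Lemma part1 : rel_fin_gen mul e inv H.
Proof.
have hrc := rc0; have hA := A0.
pose B := rc + A + (K' + A') + rc.
have [gs hgs] := coverB B; exists gs => g.
have [n [p [_ [p0 [pn hp]]]]] := hch x0 (act g x0).
have key : forall j, (j <= n)%N -> exists g', gen mul e inv (P gs) g' /\
    d (act g' x0) (p j) <= rc + A.
  elim => [|j IH] hj.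
    exists e; split; first exact: gen_one.
    by rewrite p0; have := qe x0; lra.
  have [g' [hg' hd']] := IH (ltnW hj).
  have [g'' hg''] := Hrc x0 (p j.+1).
  have hdist : d (act g' x0) (act g'' x0) <= B.
    have t1 := dtri (act g' x0) (p j) (act g'' x0).
    have t2 := dtri (p j) (p j.+1) (act g'' x0).
    have := hp j; rewrite (dsym (p j.+1)) in t2; rewrite /B; lra.
  have [s [hs hH]] := hgs _ _ hdist.
  exists g''; split; last lra.
  exact: gen_close hg' hs hH.
have [g' [hg' hd']] := key n (leqnn n); rewrite pn in hd'.
have hdist : d (act g' x0) (act g x0) <= B by rewrite /B; have := hK'; have := hA'; lra.
have [s [hs hH]] := hgs _ _ hdist.
exact: gen_close hg' hs hH.
Qed.

Lemma fi1 g : exists cs, forall l, H l -> exists c, List.In c cs /\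
  (conjset mul inv H g (mul (inv c) l) /\ H (mul (inv c) l)).
Proof.
have hb : bounded_in d act (fun t => exists h, H h /\ t = mul h g).
  exists x0, (A + (K * d (act g x0) x0 + A) + r0) => _ [h [hh ->]].
  have t1 := dtri (act (mul h g) x0) (act h (act g x0)) x0.
  have t2 := dtri (act h (act g x0)) (act h x0) x0.
  have v := qc g h x0; rewrite dsym in v.
  have u := qi_up h (act g x0) x0.
  have w := Hb hh.
  lra.
have [gs hgs] := Hcov hb.
have aux : forall gs', exists cs, forall gi, List.In gi gs' ->
    (exists h, H h /\ H (mul (inv gi) (mul h g))) ->
    exists c, List.In c cs /\ H c /\ H (mul (inv gi) (mul c g)).
  elim => [|gi gs' [cs hcs]]; first by exists nil.
  case: (classic (exists h, H h /\ H (mul (inv gi) (mul h g)))) => [[h hh]|hn].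
    exists (h :: cs) => gj /= [<-|hj] hex; first by exists h; split; [left|].
    by have [c [hc hc']] := hcs _ hj hex; exists c; split; [right|].
  exists cs => gj /= [<-|hj] hex; first by case: (hn hex).
  exact: hcs.
have [cs hcs] := aux gs.
exists cs => l hl.
have [gi [hgi hH]] := hgs (mul l g) (ex_intro _ l (conj hl erefl)).
have [c [hc [Hc Hc']]] := hcs gi hgi (ex_intro _ l (conj hl hH)).
exists c; split => //; split; last by apply: (HM HH); [apply: (HV HH)|].
have E : mul (mul (inv g) (mul (inv c) l)) g =
   mul (inv (mul (inv gi) (mul c g))) (mul (inv gi) (mul l g)) by gsimp HG.
by rewrite /conjset E; apply: (HM HH) (HV HH Hc') hH.
Qed.

Lemma part2 : commensurated mul inv H.
Proof.
move=> g; split; first exact: fi1.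
have [cs hcs] := fi1 (inv g).
exists (map (fun c => mul g (mul c (inv g))) cs) => l hl.
have [c [hc [h1 h2]]] := hcs _ hl.
exists (mul g (mul c (inv g))); split; first exact: List.in_map.
split.
  have E : mul (mul (inv g) (mul (inv (mul g (mul c (inv g)))) l)) g =
     mul (inv c) (mul (mul (inv g) l) g) by gsimp HG.
  by rewrite /conjset E.
have E : mul (inv (mul g (mul c (inv g)))) l =
   mul (mul (inv (inv g)) (mul (inv c) (mul (mul (inv g) l) g))) (inv g) by gsimp HG.
by rewrite E.
Qed.

Section Part3.
Variable S : list G.
Hypothesis HS : rel_gen_set mul e inv H S.
Notation path := (rel_path mul inv H S).

Lemma Smax : exists M, 0 <= M /\ forall s, List.In s S -> d x0 (act s x0) <= M.
Proof.
elim: S => [|s S' [M [hM hs]]]; first by exists 0; split.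
exists (d x0 (act s x0) + M); split; first by have := dge0 x0 (act s x0); lra.
move=> s' /= [<-|h]; first lra.
have := hs _ h; have := dge0 x0 (act s x0); lra.
Qed.

Lemma path_any a b : exists n, path n a b.
Proof.
have [n hn] := path_exists HG HH (HS (mul (inv a) b)).
exists n; have := path_left HG a hn; by rewrite (g1r HG) (gKV HG).
Qed.

Lemma part3 : quasi_conj_to_cosets mul inv d act H S.
Proof.
have hrc := rc0; have hA := A0; have hK := K1; have hr0 := r0ge0.
have hK'0 := hK'; have hA'0 := hA'.
have [f hf] : exists f : X -> G, forall x, d (act (f x) x0) x <= rc.
  by have [f0 hf0] := boolp.choice (fun x => Hrc x0 x); exists f0.
have [M [hM hMs]] := Smax.
pose E0 := K * r0 + 2 * A.
pose E1 := E0 + (K * M + 2 * A) + E0 + 1.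
have hE0 : 0 <= E0 by rewrite /E0; have := mulr_ge0 (le_trans ler01 hK) hr0; lra.
have hE1 : 0 <= E1 by rewrite /E1; have := mulr_ge0 (le_trans ler01 hK) hM; lra.
have hedge : forall a b, rel_edge mul inv H S a b -> d (act a x0) (act b x0) <= E1 - 1.
  move=> a b [g [s [hs hc]]].
  have hgs : d (act g x0) (act (mul g s) x0) <= K * M + 2 * A.
    have := disp g (mul g s); rewrite (gVK HG) => h1.
    have := Kd_le (hMs _ hs); lra.
  case: hc => [[h1 h2]|[h1 h2]].
    have u1 := d_sc h1; have u2 := d_sc (sc_sym HG HH h2).
    have t1 := dtri (act a x0) (act g x0) (act b x0).
    have t2 := dtri (act g x0) (act (mul g s) x0) (act b x0).
    rewrite /E1 /E0; lra.
  have u1 := d_sc h2; have u2 := d_sc (sc_sym HG HH h1).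
  have t1 := dtri (act a x0) (act (mul g s) x0) (act b x0).
  have t2 := dtri (act (mul g s) x0) (act g x0) (act b x0).
  rewrite dsym in hgs; rewrite /E1 /E0; lra.
have hpath : forall n a b, path n a b -> d (act a x0) (act b x0) <= n%:R * E1 + E0.
  elim => [|n IH] a b /=; first by rewrite mul0r add0r; apply: d_sc.
  case=> c [h1 h2]; have := IH _ _ h1; have := hedge _ _ h2.
  have := dtri (act a x0) (act c x0) (act b x0).
  rewrite -natr1 mulrDl mul1r; lra.
pose B1 := rc + (K' + A') + rc.
have [N1 hN1] := lemL HS B1.
have [N2 hN2] := lemL HS rc.
pose B3 := A + (K * rc + A) + rc.
have [N3 hN3] := lemL HS B3.
pose c0 := 2 * rc + E0.
pose u := (N1%:R : R).
have hu : 0 <= u by exact: ler0n.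
pose K1 := E1 + u * K' + 1.
pose A1 := c0 + u * (K' * A' + 1) + N2%:R.
have hN2r : 0 <= (N2%:R : R) by exact: ler0n.
have huK : 0 <= u * K' by exact: mulr_ge0.
have huA : 0 <= u * (K' * A' + 1) by apply: mulr_ge0 => //; have := mulr_ge0 hK'0 hA'0; lra.
exists f, K1, A1; split; last first.
  exists N3%:R => g x.
  have [m [hm hp]] : exists m, (m <= N3)%N /\ path m (mul g (f x)) (f (act g x)).
    apply: hN3.
    have t1 := dtri (act (mul g (f x)) x0) (act g (act (f x) x0)) (act (f (act g x)) x0).
    have t2 := dtri (act g (act (f x) x0)) (act g x) (act (f (act g x)) x0).
    have v := qc (f x) g x0; rewrite dsym in v.
    have w := qi_up g (act (f x) x0) x.
    have w2 := Kd_le (hf x).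
    have w3 := hf (act g x); rewrite dsym in w3.
    rewrite /B3; lra.
  apply: le_trans (rwd_le R hp) _; by rewrite ler_nat.
split.
- by rewrite /K1; lra.
- by rewrite /A1 /c0; lra.
- move=> x y; apply: rwd_ge; first exact: path_any.
  move=> n hn; have h1 := hpath _ _ _ hn.
  have t1 := dtri x (act (f x) x0) y.
  have t2 := dtri (act (f x) x0) (act (f y) x0) y.
  have w1 := hf x; rewrite dsym in w1.
  have w2 := hf y.
  have hn0 : 0 <= (n%:R : R) by exact: ler0n.
  have hK1 : 0 < K1 by rewrite /K1; lra.
  have hc0 : 0 <= c0 by rewrite /c0; lra.
  have : d x y <= (n%:R + c0) * K1.
    have q1 : n%:R * E1 <= n%:R * K1 by rewrite ler_wpM2l // /K1; lra.
    have q2 : c0 * 1 <= c0 * K1 by rewrite ler_wpM2l // /K1; lra.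
    have hc0d : c0 = 2 * rc + E0 by [].
    rewrite mulrDl; lra.
  rewrite -ler_pdivrMr // => q.
  rewrite /A1; lra.
- move=> x y.
  have [n [p [hn [p0 [pn hp]]]]] := hch x y.
  have key : forall j, exists m, (m <= j * N1)%N /\ path m (f x) (f (p j)).
    elim => [|j [m [hm hpm]]].
      by exists 0%N; split => //=; rewrite p0; exact: (sc_refl HG HH).
    have [k [hk hpk]] : exists k, (k <= N1)%N /\ path k (f (p j)) (f (p j.+1)).
      apply: hN1.
      have t1 := dtri (act (f (p j)) x0) (p j) (act (f (p j.+1)) x0).
      have t2 := dtri (p j) (p j.+1) (act (f (p j.+1)) x0).
      have w1 := hf (p j). have w2 := hf (p j.+1); rewrite dsym in w2.
      have := hp j; rewrite /B1; lra.
    exists (m + k)%N; split; last exact: (path_cat HG HH hpm hpk).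
    by rewrite mulSn addnC leq_add.
  have [m [hm hpm]] := key n; rewrite pn in hpm.
  apply: le_trans (rwd_le R hpm) _.
  have q1 : (m%:R : R) <= n%:R * u by rewrite /u -natrM ler_nat.
  have q2 : n%:R * u <= (K' * (d x y + A') + 1) * u by rewrite ler_wpM2r.
  have hd0 := dge0 x y.
  have q3 : 0 <= E1 * d x y by apply: mulr_ge0 => //; rewrite /E1; have := mulr_ge0 (le_trans ler01 hK) hM; lra.
  have hc0 : 0 <= c0 by rewrite /c0; lra.
  rewrite /K1 /A1; lra.
- move=> g; exists (act g x0).
  have [m [hm hp]] := hN2 (f (act g x0)) g (hf _).
  apply: le_trans (rwd_le R hp) _.
  have : (m%:R : R) <= N2%:R by rewrite ler_nat.
  have hc0 : 0 <= c0 by rewrite /c0; lra.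
  rewrite /A1; lra.
Qed.
End Part3.

End Main.

End Geo.

Theorem propositionE (R : realType) (G : Type) (mul : G -> G -> G) (e : G)
  (inv : G -> G) (HG : is_group mul e inv)
  (X : Type) (d : X -> X -> R) (Hd : is_metric d) (Hqg : quasi_geodesic d)
  (act : G -> X -> X) (Hqa : quasi_action mul e d act) (Hcob : cobounded d act)
  (H : G -> Prop) (HH : coarse_stabiliser mul e inv d act H) :
  rel_fin_gen mul e inv H /\
  commensurated mul inv H /\
  (forall S : list G, rel_gen_set mul e inv H S ->
     quasi_conj_to_cosets mul inv d act H S).
Proof.
have [K [A [qi qc qe]]] := Hqa.
case: HH => HHs [x0 [r0 Hb]] Hcov.
have [rc Hrc] := Hcob.
have [K' [A' [hK' [hA' hch]]]] := chain Hqg.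
split; [|split].
- exact: (part1 HG Hd qi qc qe x0 Hcov Hrc hK' hA' hch).
- exact: (part2 HG Hd qi qc HHs Hb Hcov).
- by move=> S HS; exact: (part3 HG Hd qi qc qe HHs Hb Hcov Hrc hK' hA' hch HS).
Qed.
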